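(* Let $\mathcal{C}_1,\mathcal{C}_2,\mathcal{C}_3$ be pairwise disjoint maximal commuting classes of two-qubit Pauli operators ($d=4$), and suppose there is a maximal commuting class $\mathcal{S}$ consisting of one element from each of $\mathcal{C}_1$, $\mathcal{C}_2$, $\mathcal{C}_3$. Let $\mathcal{B}_i$ be the common eigenbasis of $\mathcal{C}_i$. Then every common eigenstate $|\psi\rangle$ of the operators in $\mathcal{S}$ saturates the uncertainty relation $\frac13\sum_{i=1}^3 H_2(\mathcal{B}_i\,\|\,|\psi\rangle)\ge 1$, i.e. $\frac13\sum_{i=1}^3 H_2(\mathcal{B}_i\,\|\,|\psi\rangle)= 1$.
   Context: Two-qubit Pauli operators are the tensor products $P_1\otimes P_2$ with $P_k\in\{I,X,Y,Z\}$. A maximal commuting class in $d=4$ is a set of $3$ mutually commuting non-identity two-qubit Pauli operators; its common eigenbasis is an orthonormal basis of $\mathbb{C}^4$. For an orthonormal basis $\mathcal{B}=\{|b^{(j)}\rangle\}_{j=1}^d$ and a unit vector $|\psi\rangle$, the collision entropy is $H_2(\mathcal{B}\,\|\,|\psi\rangle)=-\log_2\sum_{j=1}^d|\langle b^{(j)}|\psi\rangle|^4$. *)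

(* Defs.v *)
From HB Require Import structures.
From mathcomp Require Import all_boot all_order all_algebra.
From mathcomp Require Import reals exp.
From mathcomp Require Import complex mxtens.
Set Implicit Arguments. Unset Strict Implicit. Unset Printing Implicit Defensive.
Import Order.TTheory GRing.Theory Num.Theory.
Local Open Scope ring_scope.

Section Defs.
Variable R : realType.
Local Notation C := (complex R).

(* single-qubit Paulis, indexed 0 = I, 1 = X, 2 = Y, 3 = Z *)
Definition pauli1 (k : 'I_4) : 'M[C]_2 :=
  \matrix_(i < 2, j < 2)
    match val k with
    | 0 => if i == j then 1 else 0
    | 1 => if i == j then 0 else 1
    | 2 => if i == j then 0
           else if val i == 0 then Complex 0 (-1) else Complex 0 1
    | _ => if i == j then (if val i == 0 then 1 else -1) else 0
    end.

Definition pauli2 (p : 'I_4 * 'I_4) : 'M[C]_4 := pauli1 p.1 *t pauli1 p.2.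

Definition pauli_id : 'I_4 * 'I_4 := (0, 0).

Definition max_comm_class (S : {set 'I_4 * 'I_4}) : Prop :=
  [/\ #|S| = 3%N, pauli_id \notin S &
      forall p q, p \in S -> q \in S -> pauli2 p *m pauli2 q = pauli2 q *m pauli2 p].

Definition cdot (u v : 'cV[C]_4) : C := \sum_(k < 4) conjc (u k 0) * v k 0.

Definition sqmod (z : C) : R := complex.Re z ^+ 2 + complex.Im z ^+ 2.

Definition eigvec (A : 'M[C]_4) (v : 'cV[C]_4) : Prop :=
  exists lam : C, A *m v = lam *: v.

Definition common_eigenbasis (S : {set 'I_4 * 'I_4}) (B : 'I_4 -> 'cV[C]_4) : Prop :=
  (forall j k, cdot (B j) (B k) = (j == k)%:R) /\
  (forall p j, p \in S -> eigvec (pauli2 p) (B j)).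

Definition H2 (B : 'I_4 -> 'cV[C]_4) (psi : 'cV[C]_4) : R :=
  - (ln (\sum_(j < 4) sqmod (cdot (B j) psi) ^+ 2) / ln 2).

End Defs.

(* Main.v *)
Require Import Defs.
From HB Require Import structures.
From mathcomp Require Import all_boot all_order all_algebra.
From mathcomp Require Import reals exp.
From mathcomp Require Import complex mxtens.
From mathcomp Require Import ring lra.
Import Order.TTheory GRing.Theory Num.Theory.
Local Open Scope ring_scope.

Section Pauli.
Variable R : realType.
Local Notation C := (complex R).

Definition sym1 (a b : 'I_4) : bool :=
  [&& (a != 0%N :> nat), (b != 0%N :> nat) & (a != b)].
Definition sym (p q : 'I_4 * 'I_4) : bool := sym1 p.1 q.1 (+) sym1 p.2 q.2.

Lemma negi : Complex (0:R) (-1) = - Complex 0 1.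
Proof. by simpc. Qed.
Lemma ii : Complex (0:R) 1 * Complex 0 1 = -1.
Proof. by simpc. Qed.

Ltac cnorm := rewrite ?(mul0r,mulr0,mul1r,mulr1,mulN1r,mulrN1,mulrN,mulNr,opprK,add0r,addr0,ii,oppr0,addNr,addrN).

Lemma p1comm (a b : 'I_4) : pauli1 R a *m pauli1 R b =
  (if sym1 a b then -1 else 1) *: (pauli1 R b *m pauli1 R a).
Proof.
apply/matrixP => i j; rewrite !mxE !big_ord_recr !big_ord0 /= !mxE negi.
case: a => [[|[|[|[|a]]]] Ha] //; case: b => [[|[|[|[|b]]]] Hb] //;
 case: i => [[|[|i]] Hi] //; case: j => [[|[|j]] Hj] //; rewrite /=; cnorm => //.
Qed.

Lemma p1sq (a : 'I_4) : pauli1 R a *m pauli1 R a = 1.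
Proof.
apply/matrixP => i j; rewrite !mxE !big_ord_recr !big_ord0 /= !mxE negi.
case: a => [[|[|[|[|?]]]] ?]; case: i => [[|[|?]] ?]; case: j => [[|[|?]] ?];
  rewrite /=; cnorm => //.
Qed.

Lemma p10 : pauli1 R 0 = 1.
Proof.
apply/matrixP => i j; rewrite !mxE.
by case: i => [[|[|?]] ?]; case: j => [[|[|?]] ?].
Qed.

Lemma p1herm (a : 'I_4) i j : conjc (pauli1 R a i j) = pauli1 R a j i.
Proof.
rewrite !mxE.
case: a => [[|[|[|[|?]]]] ?]; case: i => [[|[|?]] ?]; case: j => [[|[|?]] ?];
  rewrite /= //; simpc; reflexivity.
Qed.

Lemma p1tr (a b : 'I_4) : a != b -> \tr (pauli1 R a *m pauli1 R b) = 0.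
Proof.
rewrite /mxtrace !big_ord_recr !big_ord0 /= !mxE !big_ord_recr !big_ord0 /= !mxE negi.
case: a => [[|[|[|[|?]]]] ?]; case: b => [[|[|[|[|?]]]] ?]; rewrite /= => // _; cnorm => //.
Qed.

Lemma tens11 m n : (1 : 'M[C]_m) *t (1 : 'M[C]_n) = 1.
Proof.
apply/matrixP => i j; case: (mxtens_indexP i) => i1 i2; case: (mxtens_indexP j) => j1 j2.
rewrite tensmxE !mxE (inj_eq (can_inj (@mxtens_indexK _ _))) xpair_eqE.
by case: (i1 == j1); case: (i2 == j2); rewrite /= ?mulr1 ?mulr0 ?mul0r.
Qed.

Lemma tensZ m n p q (a b : C) (A : 'M[C]_(m,n)) (B : 'M[C]_(p,q)) :
  (a *: A) *t (b *: B) = (a * b) *: (A *t B).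
Proof. by apply/matrixP => i j; rewrite !mxE mulrACA. Qed.

Lemma tr_tens m n (A : 'M[C]_m) (B : 'M[C]_n) : \tr (A *t B) = \tr A * \tr B.
Proof.
rewrite /mxtrace (reindex (@mxtens_index m n)); last first.
  by exists (@mxtens_unindex m n) => x _; [apply: mxtens_indexK | apply: mxtens_unindexK].
under eq_bigr => ij _ do rewrite mxE mxtens_indexK.
rewrite big_distrl /=; under [RHS]eq_bigr => i _ do rewrite big_distrr /=.
by rewrite pair_big.
Qed.

Lemma p2mul p q : pauli2 R p *m pauli2 R q =
  (pauli1 R p.1 *m pauli1 R q.1) *t (pauli1 R p.2 *m pauli1 R q.2).
Proof. rewrite /pauli2. have := @tensmx_mul C 2 2 2 2 2 2 (pauli1 R p.1) (pauli1 R p.2) (pauli1 R q.1) (pauli1 R q.2). move=> h. exact h. Qed.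

Lemma p2sq p : pauli2 R p *m pauli2 R p = 1.
Proof. by rewrite p2mul !p1sq tens11. Qed.

Lemma p2id : pauli2 R pauli_id = 1.
Proof. by rewrite /pauli2 /= p10 tens11. Qed.

Lemma p2comm p q : pauli2 R p *m pauli2 R q =
  (if sym p q then -1 else 1) *: (pauli2 R q *m pauli2 R p).
Proof.
rewrite !p2mul (p1comm p.1) (p1comm p.2) tensZ /sym; congr (_ *: _).
by case: (sym1 _ _); case: (sym1 _ _); rewrite /= ?mulrNN ?mulr1 ?mul1r.
Qed.

Lemma tensE (A B : 'M[C]_2) (i j : 'I_4) :
  (A *t B : 'M[C]_4) i j = A (@mxtens_unindex 2 2 i).1 (@mxtens_unindex 2 2 j).1 *
     B (@mxtens_unindex 2 2 i).2 (@mxtens_unindex 2 2 j).2.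
Proof. by rewrite mxE. Qed.

Lemma p2herm p i j : conjc (pauli2 R p i j) = pauli2 R p j i.
Proof. by rewrite /pauli2 !tensE rmorphM /= !p1herm. Qed.

Lemma p2tr p q : p != q -> \tr (pauli2 R p *m pauli2 R q) = 0.
Proof.
move=> npq; rewrite p2mul.
transitivity (\tr (pauli1 R p.1 *m pauli1 R q.1) * \tr (pauli1 R p.2 *m pauli1 R q.2)).
  by have h := tr_tens 2 2 (pauli1 R p.1 *m pauli1 R q.1) (pauli1 R p.2 *m pauli1 R q.2); exact h.
case: p q npq => [p1 p2] [q1 q2] /=; rewrite xpair_eqE negb_and.
by case/orP => [/p1tr -> | /p1tr ->]; rewrite ?mul0r ?mulr0.
Qed.

End Pauli.


Section Lin.
Variable R : realType.
Local Notation C := (complex R).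
Implicit Types (u v : 'cV[C]_4).

Lemma cdotZr u v c : cdot (c *: v) u = c^*%C * cdot v u.
Proof.
rewrite /cdot big_distrr; apply: eq_bigr => k _; rewrite mxE rmorphM /=; ring.
Qed.

Lemma cdotZl u v c : cdot u (c *: v) = c * cdot u v.
Proof.
rewrite /cdot big_distrr; apply: eq_bigr => k _; rewrite mxE /=; ring.
Qed.

Lemma cdot_herm (A : 'M[C]_4) (hA : forall i j, (A i j)^*%C = A j i) u v :
  cdot u (A *m v) = cdot (A *m u) v.
Proof.
rewrite /cdot.
under eq_bigr => k _ do rewrite mxE big_distrr.
under [RHS]eq_bigr => k _ do rewrite mxE rmorph_sum big_distrl.
rewrite exchange_big; apply: eq_bigr => k _; apply: eq_bigr => l _ /=.
rewrite rmorphM /= hA; ring.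
Qed.

Lemma sum_delta (F : 'I_4 -> C) k : \sum_l F l * (k == l)%:R = F k.
Proof.
rewrite (bigD1 k) //= eqxx mulr1 big1 ?addr0 // => l /negbTE.
by rewrite eq_sym => ->; rewrite mulr0.
Qed.

Variable B : 'I_4 -> 'cV[C]_4.
Hypothesis hB : forall j k, cdot (B j) (B k) = (j == k)%:R.

Lemma complete k l : \sum_j B j k 0 * (B j l 0)^*%C = (k == l)%:R.
Proof.
set M := \matrix_(k, j) B j k 0 : 'M[C]_4.
set Mh := \matrix_(j, k) (B j k 0)^*%C : 'M[C]_4.
have h1 : Mh *m M = 1%:M.
  apply/matrixP => j k'; rewrite !mxE -hB /cdot; apply: eq_bigr => m _; rewrite !mxE.
  done.
have := mulmx1C h1 => /matrixP /(_ k l); rewrite !mxE => <-.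
by apply: eq_bigr => j _; rewrite !mxE.
Qed.

Lemma parseval u v : cdot u v = \sum_j (cdot (B j) u)^*%C * cdot (B j) v.
Proof.
transitivity (\sum_k \sum_l (u k 0)^*%C * v l 0 * \sum_j B j k 0 * (B j l 0)^*%C).
  apply: eq_bigr => k _; under eq_bigr => l _ do rewrite complete.
  by rewrite sum_delta.
rewrite /cdot.
under [RHS]eq_bigr => j _ do rewrite rmorph_sum big_distrl.
under [RHS]eq_bigr => j _ do under eq_bigr => k _ do rewrite big_distrr.
rewrite [RHS]exchange_big; apply: eq_bigr => k _ /=.
rewrite [RHS]exchange_big; apply: eq_bigr => l _ /=.
rewrite big_distrr; apply: eq_bigr => j _ /=.
rewrite rmorphM /= conjcK; ring.
Qed.

Lemma trace_basis (A : 'M[C]_4) : \tr A = \sum_j cdot (B j) (A *m B j).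
Proof.
transitivity (\sum_k \sum_l A k l * \sum_j B j l 0 * (B j k 0)^*%C).
  rewrite /mxtrace; apply: eq_bigr => k _; under eq_bigr => l _ do rewrite complete.
  rewrite -(sum_delta (fun l => A k l) k); apply: eq_bigr => l _.
  by rewrite eq_sym.
rewrite /cdot.
under [RHS]eq_bigr => j _ do under eq_bigr => k _ do rewrite mxE big_distrr.
rewrite [RHS]exchange_big; apply: eq_bigr => k _ /=.
rewrite [RHS]exchange_big; apply: eq_bigr => l _ /=.
rewrite big_distrr; apply: eq_bigr => j _ /=; ring.
Qed.

End Lin.


Section Eig.
Local Open Scope complex_scope.
Local Open Scope ring_scope.
Variable R : realType.
Local Notation C := (complex R).
Implicit Types (u v psi : 'cV[C]_4).

Lemma sqmodE (z : C) : z^*%C * z = (sqmod z)%:C.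
Proof. case: z => a b; rewrite /sqmod /=; simpc; congr Complex; ring. Qed.

Lemma sqmod_ge0 (z : C) : 0 <= sqmod z.
Proof. by rewrite /sqmod addr_ge0 // sqr_ge0. Qed.

Lemma cdotN u v : cdot u (- v) = - cdot u v.
Proof. by rewrite -scaleN1r cdotZl mulN1r. Qed.

Lemma eig_pm1 r v : cdot v v = 1 -> eigvec (pauli2 R r) v ->
  exists2 s : R, (s = 1 \/ s = -1) & pauli2 R r *m v = s%:C *: v.
Proof.
move=> hv [lam hl].
have e : pauli2 R r *m (pauli2 R r *m v) = v by rewrite mulmxA p2sq mul1mx.
have h2 : cdot v (pauli2 R r *m (pauli2 R r *m v)) = lam * lam.
  by rewrite hl -scalemxAr hl scalerA cdotZl hv mulr1.
rewrite e hv in h2.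
have : lam ^+ 2 == 1 by rewrite expr2 -h2.
rewrite sqrf_eq1 => /orP [/eqP el | /eqP el].
  by exists 1; [left | rewrite rmorph1 -el].
by exists (-1); [right | rewrite rmorphN1 -el].
Qed.

Definition ev (r : 'I_4 * 'I_4) v : R := complex.Re (cdot v (pauli2 R r *m v)).

Lemma eigE r v : cdot v v = 1 -> eigvec (pauli2 R r) v ->
  pauli2 R r *m v = (ev r v)%:C *: v /\ (ev r v = 1 \/ ev r v = -1).
Proof.
move=> hv he; have [s hs hP] := eig_pm1 _ _ hv he.
have -> : ev r v = s by rewrite /ev hP cdotZl hv mulr1.
by [].
Qed.

Lemma anti0 (X : 'M[C]_4) q psi : cdot psi psi = 1 -> eigvec (pauli2 R q) psi ->
  X *m pauli2 R q = - (pauli2 R q *m X) -> cdot psi (X *m psi) = 0.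
Proof.
move=> hv he hX; have [s hs hP] := eig_pm1 _ _ hv he.
set z := cdot psi (X *m psi).
have h1 : s%:C * z = cdot psi (X *m (pauli2 R q *m psi)) by rewrite hP -scalemxAr cdotZl.
rewrite mulmxA hX mulNmx cdotN -mulmxA (@cdot_herm R _ (p2herm R q)) hP cdotZr conjc_real -/z in h1.
have h2 : s%:C * z *+ 2 = 0 by rewrite mulr2n {1}h1 addNr.
move/eqP: h2; rewrite mulrn_eq0 /= mulf_eq0 => /orP [/eqP hs0 | /eqP //].
by case: hs hs0 => ->; rewrite ?rmorph1 ?rmorphN1 => /eqP; rewrite ?oppr_eq0 oner_eq0.
Qed.

End Eig.


Section Alg.
Local Open Scope complex_scope.
Local Open Scope ring_scope.
Variable R : realType.
Local Notation C := (complex R).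

Lemma sq_half (P : R) : P = 0 \/ P = 1/2 -> P ^+ 2 = P / 2.
Proof. by case=> ->; field. Qed.
Lemma fin4 (P0 P1 P2 P3 : R) : P0 + P1 + P2 + P3 = 1 ->
  (P0 = 0 \/ P0 = 1/2) -> (P1 = 0 \/ P1 = 1/2) -> (P2 = 0 \/ P2 = 1/2) -> (P3 = 0 \/ P3 = 1/2) ->
  P0 ^+ 2 + P1 ^+ 2 + P2 ^+ 2 + P3 ^+ 2 = 1 / 2.
Proof. move=> s /sq_half -> /sq_half -> /sq_half -> /sq_half ->; lra. Qed.
Lemma alg4 (P0 P1 P2 P3 u0 u1 u2 u3 v0 v1 v2 v3 : R) :
  0 <= P0 -> 0 <= P1 -> 0 <= P2 -> 0 <= P3 ->
  (u0 = 1 \/ u0 = -1) -> (u1 = 1 \/ u1 = -1) -> (u2 = 1 \/ u2 = -1) -> (u3 = 1 \/ u3 = -1) ->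
  (v0 = 1 \/ v0 = -1) -> (v1 = 1 \/ v1 = -1) -> (v2 = 1 \/ v2 = -1) -> (v3 = 1 \/ v3 = -1) ->
  P0 + P1 + P2 + P3 = 1 ->
  u0 * P0 + u1 * P1 + u2 * P2 + u3 * P3 = 1 ->
  v0 * P0 + v1 * P1 + v2 * P2 + v3 * P3 = 0 ->
  u0 * v0 * P0 + u1 * v1 * P1 + u2 * v2 * P2 + u3 * v3 * P3 = 0 ->
  u0 + u1 + u2 + u3 = 0 -> v0 + v1 + v2 + v3 = 0 ->
  u0 * v0 + u1 * v1 + u2 * v2 + u3 * v3 = 0 ->
  P0 ^+ 2 + P1 ^+ 2 + P2 ^+ 2 + P3 ^+ 2 = 1 / 2.
Proof.
move=> h0 h1 h2 h3 hu0 hu1 hu2 hu3 hv0 hv1 hv2 hv3 s1 s2 s3 s4 su sv suv.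
move: hu0 hu1 hu2 hu3 s2 s4 su suv => [->|->] [->|->] [->|->] [->|->] s2 s4 su suv;
 try (exfalso; clear -su; lra).
all: move: hv0 hv1 hv2 hv3 s3 s4 sv suv => [->|->] [->|->] [->|->] [->|->] s3 s4 sv suv;
 try (exfalso; clear -sv; lra); try (exfalso; clear -suv; lra).
all: (have e0 : P0 = 0 \/ P0 = 1/2 by first [left; lra | right; lra]);
(have e1 : P1 = 0 \/ P1 = 1/2 by first [left; lra | right; lra]);
(have e2 : P2 = 0 \/ P2 = 1/2 by first [left; lra | right; lra]);
(have e3 : P3 = 0 \/ P3 = 1/2 by first [left; lra | right; lra]).
all: exact: fin4.
Qed.


Lemma alg_sum (P u v : 'I_4 -> R) (m : R) :
  (forall j, 0 <= P j) -> (forall j, u j = 1 \/ u j = -1) ->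
  (forall j, v j = 1 \/ v j = -1) -> (m = 1 \/ m = -1) ->
  \sum_j P j = 1 -> \sum_j u j * P j = m -> \sum_j v j * P j = 0 ->
  \sum_j u j * v j * P j = 0 -> \sum_j u j = 0 -> \sum_j v j = 0 ->
  \sum_j u j * v j = 0 -> \sum_j P j ^+ 2 = 1 / 2.
Proof.
move=> hP hu hv hm.
have key : forall u : 'I_4 -> R, (forall j, u j = 1 \/ u j = -1) ->
  \sum_j P j = 1 -> \sum_j u j * P j = 1 -> \sum_j v j * P j = 0 ->
  \sum_j u j * v j * P j = 0 -> \sum_j u j = 0 -> \sum_j v j = 0 ->
  \sum_j u j * v j = 0 -> \sum_j P j ^+ 2 = 1 / 2.
  move=> w hw; rewrite !big_ord_recr !big_ord0 /= ?add0r. move=> s1 s2 s3 s4 s5 s6 s7.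
  exact: (alg4 _ _ _ _ _ _ _ _ _ _ _ _ (hP _) (hP _) (hP _) (hP _) (hw _) (hw _) (hw _) (hw _) (hv _) (hv _) (hv _) (hv _) s1 s2 s3 s4 s5 s6 s7).
case: hm => ->; first exact: key.
move=> s1 s2 s3 s4 s5 s6 s7; apply: (key (fun j => - u j)) => //.
- by move=> j; case: (hu j) => ->; [right | left]; rewrite ?opprK.
- by under eq_bigr do rewrite mulNr; rewrite sumrN s2 opprK.
- by under eq_bigr do rewrite !mulNr; rewrite sumrN s4 oppr0.
- by rewrite sumrN s5 oppr0.
- by under eq_bigr do rewrite mulNr; rewrite sumrN s7 oppr0.
Qed.

End Alg.


Section Class.
Local Open Scope complex_scope.
Local Open Scope ring_scope.
Variable R : realType.
Local Notation C := (complex R).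

Lemma class_sum (B : 'I_4 -> 'cV[C]_4) (p a q : 'I_4 * 'I_4) (psi : 'cV[C]_4) :
  (forall j k, cdot (B j) (B k) = (j == k)%:R) ->
  (forall j, eigvec (pauli2 R p) (B j)) -> (forall j, eigvec (pauli2 R a) (B j)) ->
  p != a -> p != pauli_id -> a != pauli_id ->
  cdot psi psi = 1 -> eigvec (pauli2 R p) psi -> eigvec (pauli2 R q) psi ->
  sym a q -> ~~ sym p q ->
  \sum_j sqmod (cdot (B j) psi) ^+ 2 = 1 / 2.
Proof.
move=> hB hBp hBa hpa hp0 ha0 hpsi hpp hq hsa hsp.
have hBB j : cdot (B j) (B j) = 1 by rewrite hB eqxx.
pose u j := ev R p (B j). pose v j := ev R a (B j).
pose x j := cdot (B j) psi. pose P j := sqmod (x j).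
have eu j : pauli2 R p *m B j = (u j)%:C *: B j /\ (u j = 1 \/ u j = -1).
  exact: (@eigE R _ _ (hBB j) (hBp j)).
have evv j : pauli2 R a *m B j = (v j)%:C *: B j /\ (v j = 1 \/ v j = -1).
  exact: (@eigE R _ _ (hBB j) (hBa j)).
have [ep hm] := @eigE R _ _ hpsi hpp.
have ea : pauli2 R a *m pauli2 R q = - (pauli2 R q *m pauli2 R a).
  by rewrite p2comm hsa scaleN1r.
have epa : (pauli2 R p *m pauli2 R a) *m pauli2 R q =
           - (pauli2 R q *m (pauli2 R p *m pauli2 R a)).
  rewrite -mulmxA ea mulmxN mulmxA mulmxA [pauli2 R p *m pauli2 R q]p2comm (negbTE hsp).
  by rewrite scale1r.
have hx j : cdot (B j) (pauli2 R p *m psi) = (u j)%:C * x j.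
  by rewrite (@cdot_herm R _ (p2herm R p)) (eu j).1 cdotZr conjc_real.
have hxa j : cdot (B j) (pauli2 R a *m psi) = (v j)%:C * x j.
  by rewrite (@cdot_herm R _ (p2herm R a)) (evv j).1 cdotZr conjc_real.
have hxpa j : cdot (B j) ((pauli2 R p *m pauli2 R a) *m psi) = (u j * v j)%:C * x j.
  rewrite -mulmxA (@cdot_herm R _ (p2herm R p)) (eu j).1 cdotZr conjc_real hxa.
  by rewrite rmorphM mulrA.
have E1 : \sum_j (P j)%:C = 1.
  rewrite -hpsi (@parseval R B hB); apply: eq_bigr => j _; by rewrite sqmodE.
have E2 : \sum_j (u j * P j)%:C = (ev R p psi)%:C.
  have := @parseval R B hB psi (pauli2 R p *m psi).
  rewrite {1}ep cdotZl hpsi mulr1 => ->; apply: eq_bigr => j _.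
  by rewrite -/(x j) hx mulrCA sqmodE rmorphM.
have E3 : \sum_j (v j * P j)%:C = 0.
  transitivity (cdot psi (pauli2 R a *m psi)); last exact: (@anti0 R _ _ _ hpsi hq ea).
  rewrite (@parseval R B hB); apply: eq_bigr => j _.
  by rewrite -/(x j) hxa mulrCA sqmodE rmorphM.
have E4 : \sum_j (u j * v j * P j)%:C = 0.
  transitivity (cdot psi ((pauli2 R p *m pauli2 R a) *m psi)); last exact: (@anti0 R _ _ _ hpsi hq epa).
  rewrite (@parseval R B hB); apply: eq_bigr => j _.
  by rewrite -/(x j) hxpa mulrCA sqmodE rmorphM.
have T1 : \sum_j (u j)%:C = 0.
  transitivity (\tr (pauli2 R p)); last by have := @p2tr R _ _ hp0; rewrite p2id mulmx1.
  rewrite (@trace_basis R B hB).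
  by apply: eq_bigr => j _; rewrite (eu j).1 cdotZl hBB mulr1.
have T2 : \sum_j (v j)%:C = 0.
  transitivity (\tr (pauli2 R a)); last by have := @p2tr R _ _ ha0; rewrite p2id mulmx1.
  rewrite (@trace_basis R B hB).
  by apply: eq_bigr => j _; rewrite (evv j).1 cdotZl hBB mulr1.
have T3 : \sum_j (u j * v j)%:C = 0.
  transitivity (\tr (pauli2 R p *m pauli2 R a)); last exact: (@p2tr R _ _ hpa).
  rewrite (@trace_basis R B hB).
  apply: eq_bigr => j _; rewrite -mulmxA (evv j).1 -scalemxAr (eu j).1.
  by rewrite !cdotZl hBB mulr1 rmorphM mulrC.
have toR (f : 'I_4 -> R) (c : R) : \sum_j (f j)%:C = c%:C -> \sum_j f j = c.
  by move=> h; apply: complexI; rewrite rmorph_sum.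
apply: (@alg_sum R P u v (ev R p psi)).
- by move=> j; apply: sqmod_ge0.
- by move=> j; case: (eu j).
- by move=> j; case: (evv j).
- exact: hm.
- by apply: toR; rewrite E1 rmorph1.
- by apply: toR; rewrite E2.
- by apply: toR; rewrite E3 rmorph0.
- by apply: toR; rewrite E4 rmorph0.
- by apply: toR; rewrite T1 rmorph0.
- by apply: toR; rewrite T2 rmorph0.
- by apply: toR; rewrite T3 rmorph0.
Qed.

End Class.


Definition o4 : seq 'I_4 := [:: @Ordinal 4 0 isT; @Ordinal 4 1 isT; @Ordinal 4 2 isT; @Ordinal 4 3 isT].
Definition labs : seq ('I_4 * 'I_4) := [seq (x, y) | x <- o4, y <- o4].
Lemma labsP (p : 'I_4 * 'I_4) : p \in labs.
Proof.
case: p => [[a Ha] [b Hb]].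
case: a Ha => [|[|[|[|?]]]] Ha //; case: b Hb => [|[|[|[|?]]]] Hb //; vm_compute; reflexivity.
Qed.
Definition combcond (p a c q : 'I_4 * 'I_4) :=
  [&& p != pauli_id, a != pauli_id, c != pauli_id, q != pauli_id, p != a, p != c, a != c,
      ~~ sym p a, ~~ sym p c, ~~ sym a c, q != p, q != a, q != c & ~~ sym q p].
Lemma combb : all (fun p => all (fun a => all (fun c => all (fun q =>
  combcond p a c q ==> (sym q a || sym q c)) labs) labs) labs) labs.
Proof. vm_compute; reflexivity. Qed.
Lemma comb p a c q : combcond p a c q -> sym q a || sym q c.
Proof.
move: combb => /allP /(_ p (labsP p)) /allP /(_ a (labsP a)) /allP /(_ c (labsP c)) /allP /(_ q (labsP q)).
by move/implyP.
Qed.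

Lemma sym1_sym a b : sym1 a b = sym1 b a.
Proof. by rewrite /sym1 [b == a]eq_sym andbCA. Qed.
Lemma sym_sym p q : sym p q = sym q p.
Proof. by rewrite /sym (sym1_sym p.1) (sym1_sym p.2). Qed.

Section Main.
Variable R : realType.
Local Notation C := (complex R).

Lemma comm_nsym p q : pauli2 R p *m pauli2 R q = pauli2 R q *m pauli2 R p -> ~~ sym p q.
Proof.
move=> h; apply/negP => hs; move: h; rewrite p2comm hs scaleN1r => h.
set X := pauli2 R q *m pauli2 R p in h.
have X0 : X = 0.
  have : (2%:R : C) *: X == 0 by rewrite scaler_nat mulr2n -{1}h addNr.
  by rewrite scalemx_eq0 pnatr_eq0 /= => /eqP.
have : pauli2 R p = 0.
  have e : pauli2 R p = pauli2 R q *m X by rewrite /X mulmxA p2sq mul1mx.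
  by rewrite e X0 mulmx0.
move=> P0; have := p2sq R p; rewrite P0 mul0mx => /matrixP /(_ 0 0).
by rewrite !mxE eqxx /= => /eqP; rewrite eq_sym oner_eq0.
Qed.

Lemma one_class (Ci Cj : {set 'I_4 * 'I_4}) (B : 'I_4 -> 'cV[C]_4) p q psi :
  max_comm_class R Ci -> max_comm_class R Cj -> [disjoint Ci & Cj] ->
  p \in Ci -> q \in Cj -> common_eigenbasis Ci B -> cdot psi psi = 1 ->
  eigvec (pauli2 R p) psi -> eigvec (pauli2 R q) psi ->
  pauli2 R p *m pauli2 R q = pauli2 R q *m pauli2 R p ->
  H2 B psi = 1.
Proof.
move=> [ci3 ci0 cicomm] [_ cj0 _] dij pin qin [hB hBe] hpsi hpp hpq hcomm.
have : #|Ci :\ p| == 2%N by move: ci3; rewrite (cardsD1 p) pin add1n => /succn_inj ->.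
case/cards2P => a [c [nac hac]].
have ain : a \in Ci :\ p by rewrite hac !inE eqxx.
have cin : c \in Ci :\ p by rewrite hac !inE eqxx orbT.
move: ain cin; rewrite !inE => /andP [nap aC] /andP [ncp cC].
have qnC : q \in Ci = false by apply: (disjointFl dij).
have nid x : x \in Ci -> x != pauli_id by move=> xin; apply: contraNneq ci0 => <-.
have nidj : q != pauli_id by apply: contraNneq cj0 => <-.
have ncomm x y : x \in Ci -> y \in Ci -> ~~ sym x y by move=> ??; apply: comm_nsym; apply: cicomm.
have hcond : combcond p a c q.
  rewrite /combcond (nid p) // (nid a) // (nid c) // nidj ![p == _]eq_sym nap ncp nac (ncomm p a) // (ncomm p c) // (ncomm a c) // /=.
  rewrite sym_sym (comm_nsym _ _ hcomm) andbT.
  by apply/and3P; split; apply: contraFneq qnC => ->.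
have hsq : ~~ sym p q by apply: comm_nsym.
have key : forall a', a' \in Ci -> a' != p -> sym q a' ->
    \sum_j sqmod (cdot (B j) psi) ^+ 2 = 1 / 2.
  move=> a' a'C na'p hs; apply: (@class_sum R B p a' q psi) => //.
  - by move=> j; apply: hBe.
  - by move=> j; apply: hBe.
  - by rewrite eq_sym.
  - exact: nid.
  - exact: nid.
  - by rewrite sym_sym.
rewrite /H2; have -> : \sum_j sqmod (cdot (B j) psi) ^+ 2 = 1 / 2.
  by case/orP: (comb _ _ _ _ hcond) => hs; [apply: (key a) | apply: (key c)].
rewrite div1r lnV ?posrE // mulNr opprK divff //.
by rewrite gt_eqF // ln_gt0 // ltr1n.
Qed.

End Main.

Theorem theorem6 (R : realType) (C1 C2 C3 S : {set 'I_4 * 'I_4})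
    (B1 B2 B3 : 'I_4 -> 'cV[complex R]_4) (psi : 'cV[complex R]_4) :
  max_comm_class R C1 -> max_comm_class R C2 -> max_comm_class R C3 ->
  [disjoint C1 & C2] -> [disjoint C1 & C3] -> [disjoint C2 & C3] ->
  max_comm_class R S ->
  (exists p1 p2 p3, [/\ p1 \in C1, p2 \in C2, p3 \in C3 & S = [set p1; p2; p3]]) ->
  common_eigenbasis C1 B1 -> common_eigenbasis C2 B2 -> common_eigenbasis C3 B3 ->
  cdot psi psi = 1 ->
  (forall p, p \in S -> eigvec (pauli2 R p) psi) ->
  (H2 B1 psi + H2 B2 psi + H2 B3 psi) / 3 = 1.
Proof.
move=> h1 h2 h3 d12 d13 d23 [_ _ hS] [p1 [p2 [p3 [i1 i2 i3 hSe]]]] b1 b2 b3 hpsi hpsiS.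
have s1 : p1 \in S by rewrite hSe !inE eqxx.
have s2 : p2 \in S by rewrite hSe !inE eqxx ?orbT.
have s3 : p3 \in S by rewrite hSe !inE eqxx ?orbT.
rewrite (@one_class R _ _ _ _ _ _ h1 h2 d12 i1 i2 b1 hpsi (hpsiS _ s1) (hpsiS _ s2) (hS _ _ s1 s2)).
rewrite (@one_class R _ _ _ _ _ _ h2 h1 _ i2 i1 b2 hpsi (hpsiS _ s2) (hpsiS _ s1) (hS _ _ s2 s1));
  last by rewrite disjoint_sym.
rewrite (@one_class R _ _ _ _ _ _ h3 h1 _ i3 i1 b3 hpsi (hpsiS _ s3) (hpsiS _ s1) (hS _ _ s3 s1));
  last by rewrite disjoint_sym.
lra.
Qed.
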